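(* Let $n\ge3$ and let $\mathcal{M}\subseteq\{1,\dots,n\}$ be a sample set that is a union of twin samples (pairs $\{i,i+1\}$) and contains $1$ and $n$. Let $A=\mathbf{I}_{\mathcal{M}}$, $y\in\mathbb{R}^{|\mathcal{M}|}$, and let $z\in\mathbb{R}^n$ satisfy $Az=y$. Then $z$ is optimal for $\min_{z'\in\mathbb{R}^n}\|Dz'\|_1$ subject to $Az'=y$ if and only if $z$ is sign consistent (with respect to $\mathcal{M}$).
   Context: $D\in\mathbb{R}^{(n-2)\times n}$ is the second-order difference operator, $(Dz)_k=z_k-2z_{k+1}+z_{k+2}$. $\mathbf{I}_{\mathcal{M}}$ consists of the rows of the identity indexed by $\mathcal{M}$, so $Az=z_{\mathcal{M}}$. A twin sample is a pair of consecutive indices $(i,i+1)$, $i\in\{1,\dots,n-1\}$. For $k\in\{2,\dots,n-1\}$ let $s_k=\mathrm{sign}(z_{k-1}-2z_k+z_{k+1})$ (with $\mathrm{sign}(0)=0$). A profile $z$ is sign consistent (with respect to $\mathcal{M}$) if for any two consecutive samples $i<j$ in $\mathcal{M}$ (no element of $\mathcal{M}$ strictly between them) one of the following holds: (i) no sign change: for all $k,h$ with $i\le k,h\le j$ (for which $s_k,s_h$ are defined), if $s_k\ne0$ and $s_h\ne0$ then $s_k=s_h$; (ii) sign change only at the boundary: $s_k=0$ for every $k$ with $i<k<j$. *)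

(* Defs.v *)
(* Indices are 0-based ordinals 'I_n: paper index p <-> ordinal p-1. *)
From HB Require Import structures.
From mathcomp Require Import all_boot all_order all_algebra.
Set Implicit Arguments. Unset Strict Implicit. Unset Printing Implicit Defensive.
Import Order.TTheory GRing.Theory Num.Theory.
Local Open Scope ring_scope.

Section Defs.
Variables (R : realFieldType) (n : nat).

Definition diff2 : 'M[R]_(n - 2, n) :=
  \matrix_(k < n - 2, j < n)
    (if val j == val k then 1
     else if val j == (val k).+1 then -2
     else if val j == (val k).+2 then 1 else 0).

(* selection matrix I_M : rows of the identity indexed by M (in increasing order) *)
Definition selmx (M : {set 'I_n}) : 'M[R]_(#|M|, n) :=
  \matrix_(i < #|M|, j < n) (enum_val i == j)%:R.

Definition l1norm m (v : 'cV[R]_m) : R := \sum_(i < m) `|v i 0|.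

(* entry of z at a natural index (0 outside the range) *)
Definition zat (z : 'cV[R]_n) (m : nat) : R :=
  match @insub nat (fun m => m < n)%N _ m with
  | Some i => z i 0 | None => 0 end.

(* s_k = sign(z_{k-1} - 2 z_k + z_{k+1}), meaningful for interior k (0 < k < n-1) *)
Definition s2 (z : 'cV[R]_n) (k : nat) : R :=
  Num.sg (zat z k.-1 - 2 * zat z k + zat z k.+1).

Definition interior (k : nat) : bool := (0 < k < n.-1)%N.

Definition consecutive (M : {set 'I_n}) (i j : 'I_n) : Prop :=
  [/\ i \in M, j \in M, (val i < val j)%N &
      forall m : 'I_n, m \in M -> ~ (val i < val m < val j)%N].

Definition sign_consistent (M : {set 'I_n}) (z : 'cV[R]_n) : Prop :=
  forall i j : 'I_n, consecutive M i j ->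
    (forall k h : nat, (val i <= k <= val j)%N -> (val i <= h <= val j)%N ->
        interior k -> interior h -> s2 z k != 0 -> s2 z h != 0 -> s2 z k = s2 z h)
    \/ (forall k : nat, (val i < k < val j)%N -> s2 z k = 0).

Definition twin_union (M : {set 'I_n}) : Prop :=
  forall i, i \in M -> exists2 j, j \in M & (val j = (val i).+1 \/ val i = (val j).+1).

Definition l1_optimal m (A : 'M[R]_(m, n)) (y : 'cV[R]_m) (z : 'cV[R]_n) : Prop :=
  A *m z = y /\ forall z' : 'cV[R]_n, A *m z' = y -> l1norm (diff2 *m z) <= l1norm (diff2 *m z').

End Defs.

(* Main.v *)
Require Import Defs.
From mathcomp Require Import all_boot all_order all_algebra.
From mathcomp Require Import zify ring lra.
Import Order.TTheory GRing.Theory Num.Theory.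
Local Open Scope ring_scope.

Module P1.
Set Implicit Arguments. Unset Strict Implicit. Unset Printing Implicit Defensive.

Section Basic.
Variables (R : realFieldType) (n : nat).
Implicit Types (z : 'cV[R]_n).

Definition dd z (k : nat) : R := zat z k.-1 - 2 * zat z k + zat z k.+1.

Lemma zat_ord z (i : 'I_n) : zat z i = z i 0.
Proof.
rewrite /zat; case: insubP => [u _ /val_inj -> //|]; by rewrite ltn_ord.
Qed.

Lemma zat_ge z m : (n <= m)%N -> zat z m = 0.
Proof.
move=> h; rewrite /zat; case: insubP => [u hu _|//]; lia.
Qed.

Lemma sum_ind z m : (m < n)%N -> \sum_(j < n) ((val j == m)%:R * z j 0) = zat z m.
Proof.
move=> hm; rewrite (bigD1 (Ordinal hm)) //= eqxx mul1r big1 ?addr0.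
  by rewrite -(zat_ord z (Ordinal hm)).
move=> j /eqP hj; case: eqP => [h|]; last by rewrite mul0r.
by exfalso; apply: hj; apply: val_inj.
Qed.

Lemma diff2E z (r : 'I_(n - 2)) : (diff2 R n *m z) r 0 = dd z r.+1.
Proof.
have hr := ltn_ord r.
rewrite mxE /dd /=.
have e : forall j : 'I_n, diff2 R n r j * z j 0 =
  (val j == val r)%:R * z j 0 - 2 * ((val j == (val r).+1)%:R * z j 0) + (val j == (val r).+2)%:R * z j 0.
  move=> j; rewrite mxE; move: (val j) (val r) => a b.
  case: (ltngtP a b) => h.
  - have h1 : (a == b) = false by lia.
    have h2 : (a == b.+1) = false by lia.
    have h3 : (a == b.+2) = false by lia.
    by rewrite ?h1 ?h2 ?h3 /=; ring.
  - have h1 : (a == b) = false by lia.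
    case: (ltngtP a b.+1) => h'.
    + lia.
    + have h2 : (a == b.+1) = false by lia.
      case: (ltngtP a b.+2) => h''.
      * lia.
      * have h3 : (a == b.+2) = false by lia.
        by rewrite ?h1 ?h2 ?h3 /=; ring.
      * by rewrite ?h1 ?h2 ?h'' ?eqxx /=; ring.
    + by rewrite ?h1 ?h' ?eqxx (_ : (b.+1 == b.+2) = false) /=; [ring|lia].
  - have h2 : (a == b.+1) = false by lia.
    have h3 : (a == b.+2) = false by lia.
    rewrite h2 h3 /=. ring.
rewrite (eq_bigr _ (fun j _ => e j)) !big_split /= sumrN -mulr_sumr.
rewrite !sum_ind //; lia.
Qed.

End Basic.

End P1.
Import P1.

Module P2.
Set Implicit Arguments. Unset Strict Implicit. Unset Printing Implicit Defensive.

Section Gaps.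
Variables (R : realFieldType) (n : nat) (M : {set 'I_n}).

Lemma selmx_eq (z z' : 'cV[R]_n) : selmx R M *m z = selmx R M *m z' ->
  forall i, i \in M -> z i 0 = z' i 0.
Proof.
move=> E i Hi.
have := congr1 (fun A : 'M[R]_(#|M|, 1) => A (enum_rank_in Hi i) ord0) E; rewrite !mxE /=.
have ee : forall w : 'cV[R]_n, \sum_(j < n) selmx R M (enum_rank_in Hi i) j * w j ord0 = w i 0.
  move=> w; under eq_bigr do rewrite mxE.
  rewrite enum_rankK_in // (bigD1 i) //= eqxx mul1r big1 ?addr0 //.
  by move=> j /negbTE; rewrite eq_sym => ->; rewrite mul0r.
by rewrite !ee.
Qed.

Definition Mn := [seq val i | i <- enum M].

Lemma inMn (i : 'I_n) : (val i \in Mn) = (i \in M).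
Proof. by rewrite /Mn (mem_map val_inj) mem_enum. Qed.

Lemma Mn_lt k : k \in Mn -> (k < n)%N.
Proof. by move=> /mapP [i _ ->]; exact: ltn_ord. Qed.

Lemma Mn_ord k : k \in Mn -> exists2 i : 'I_n, i \in M & val i = k.
Proof. by move=> /mapP [i]; rewrite mem_enum => hi ->; exists i. Qed.

Definition consn (i j : nat) := [/\ i \in Mn, j \in Mn, (i < j)%N &
   forall m, (i < m < j)%N -> m \notin Mn].

Lemma cons_consn (i j : 'I_n) : consecutive M i j -> consn i j.
Proof.
case=> hi hj hij hm; split; rewrite ?inMn //.
move=> m hm'; apply/negP => /Mn_ord [k hk ek]; apply: (hm k hk); by rewrite ek.
Qed.

Lemma consn_cons i j : consn i j -> exists oi oj : 'I_n,
  [/\ val oi = i, val oj = j & consecutive M oi oj].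
Proof.
case=> hi hj hij hm.
case: (Mn_ord hi) => oi hoi eoi; case: (Mn_ord hj) => oj hoj eoj.
subst i j; exists oi, oj; split => //; split => //.
move=> m hm1 hm2; move: (hm (val m) hm2); by rewrite inMn hm1.
Qed.

Hypothesis h0 : 0%N \in Mn.
Hypothesis hn : n.-1 \in Mn.

Fixpoint lo (k : nat) : nat := if k \in Mn then k else if k is k'.+1 then lo k' else 0%N.

Lemma lo_in k : lo k \in Mn.
Proof. elim: k => [|k IH] /=; case: ifP => //. Qed.

Lemma lo_le k : (lo k <= k)%N.
Proof. elim: k => [|k IH] /=; case: ifP => // _; exact: leqW. Qed.

Lemma lo_max k m : (m <= k)%N -> m \in Mn -> (m <= lo k)%N.
Proof.
elim: k => [|k IH] /=.
  by rewrite leqn0 => /eqP ->.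
case: ifP => // hk hmk hm; apply: IH => //.
rewrite leq_eqVlt in hmk; case/orP: hmk => [/eqP e|//].
by rewrite e hk in hm.
Qed.

Fixpoint hif (f k : nat) : nat := if k \in Mn then k else if f is f'.+1 then hif f' k.+1 else k.
Definition hi k := hif n k.

Lemma hif_in f k : (n.-1 - k <= f)%N -> (k <= n.-1)%N -> hif f k \in Mn.
Proof.
elim: f k => [|f IH] k /=.
  move=> h1 h2; case: ifP => //; have -> : k = n.-1 by lia. by rewrite hn.
move=> h1 h2; case: ifP => // hk; apply: IH; first lia.
have : k != n.-1 by apply/eqP => e; rewrite e hn in hk.
lia.
Qed.

Lemma hif_ge f k : (k <= hif f k)%N.
Proof.
elim: f k => [|f IH] k /=; case: ifP => // _; exact: (leq_trans (leqnSn k) (IH k.+1)).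
Qed.

Lemma hif_min f k m : (k <= m)%N -> m \in Mn -> (hif f k <= m)%N.
Proof.
elim: f k => [|f IH] k /=; case: ifP => // hk hkm hm.
apply: IH => //; rewrite leq_eqVlt in hkm; case/orP: hkm => [/eqP e|//].
by rewrite e hm in hk.
Qed.

Lemma hi_in k : (k < n)%N -> hi k \in Mn.
Proof. move=> h; apply: hif_in; lia. Qed.
Lemma hi_ge k : (k <= hi k)%N. Proof. exact: hif_ge. Qed.
Lemma hi_min k m : (k <= m)%N -> m \in Mn -> (hi k <= m)%N.
Proof. exact: hif_min. Qed.

Lemma free_gap m : (m < n)%N -> m \notin Mn ->
  consn (lo m) (hi m) /\ (lo m < m < hi m)%N.
Proof.
move=> hm hf.
have l1 := lo_in m; have l2 := lo_le m; have h1 := hi_in hm; have h2 := hi_ge m.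
have l3 : lo m != m by apply/eqP => e; rewrite -e l1 in hf.
have h3 : hi m != m by apply/eqP => e; rewrite -e h1 in hf.
have hh : (lo m < m < hi m)%N by lia.
split => //; split => //; first lia.
move=> q hq; apply/negP => hqM.
case: (leqP q m) => hqm.
  have := lo_max hqm hqM; lia.
have := hi_min (ltnW hqm) hqM; lia.
Qed.

Lemma gap_unique i j m : consn i j -> (i < m < j)%N -> lo m = i /\ hi m = j.
Proof.
case=> hi' hj hij hfree hm.
have a1 : (i <= lo m)%N by apply: lo_max => //; lia.
have a2 : (lo m <= i)%N.
  case: (leqP (lo m) i) => // h; have := hfree (lo m); rewrite lo_in.
  have := lo_le m; move=> ?; move/(_ _)/negP; lia.
have b1 : (hi m <= j)%N by apply: hi_min => //; lia.
have b2 : (j <= hi m)%N.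
  case: (leqP j (hi m)) => // h; have := hfree (hi m); rewrite hi_in; last by have := Mn_lt hj; lia.
  have := hi_ge m; move=> ?; move/(_ _)/negP; lia.
split; lia.
Qed.

End Gaps.

End P2.
Import P2.

Module P3.
Set Implicit Arguments. Unset Strict Implicit. Unset Printing Implicit Defensive.

Section Cert.
Variables (R : realFieldType) (n : nat) (M : {set 'I_n}) (z : 'cV[R]_n).
Local Notation Mn := (Mn M).
Local Notation consn := (consn M).
Hypothesis h0 : 0%N \in Mn.
Hypothesis hn : n.-1 \in Mn.
Hypothesis htw : forall k, k \in Mn -> (k.+1 \in Mn) || ((0 < k)%N && (k.-1 \in Mn)).

Definition SCn i j := (forall k h, (i <= k <= j)%N -> (i <= h <= j)%N -> interior n k ->
   interior n h -> s2 z k != 0 -> s2 z h != 0 -> s2 z k = s2 z h)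
   \/ (forall k, (i < k < j)%N -> s2 z k = 0).
Hypothesis hSC : forall i j, consn i j -> SCn i j.

Lemma gap_int i j : consn i j -> (i.+1 < j)%N -> (0 < i)%N /\ (j < n.-1)%N.
Proof.
case=> hi hj hij hf hg; split.
  have := htw hi; have -> : (i.+1 \in Mn) = false.
    by apply/negbTE; apply: hf; lia.
  by case/andP.
have := htw hj; have -> : (j.-1 \in Mn) = false.
  by apply/negbTE; apply: hf; lia.
rewrite andbF orbF => /Mn_lt; lia.
Qed.

Definition caseii i j : bool := all (fun k => s2 z k == 0) (iota i.+1 (j - i.+1)).

Lemma caseiiP i j : reflect (forall k, (i < k < j)%N -> s2 z k = 0) (caseii i j).
Proof.
apply: (iffP allP) => h k hk.
  apply/eqP; apply: h; rewrite mem_iota; lia.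
apply/eqP; apply: h; move: hk; rewrite mem_iota; lia.
Qed.

Definition sig i j : R := Num.sg (\sum_(i <= k < j.+1) s2 z k).
Definition ui i j := if caseii i j then s2 z i else sig i j.
Definition uj i j := if caseii i j then s2 z j else sig i j.
Definition Phi i j (k : nat) : R := ui i j + (uj i j - ui i j) * ((k - i)%:R / (j - i)%:R).

Definition W k := if k \notin Mn then Phi (lo M k) (hi M k) k
  else if k.+1 \notin Mn then Phi (lo M k.+1) (hi M k.+1) k
  else if k.-1 \notin Mn then Phi (lo M k.-1) (hi M k.-1) k
  else s2 z k.

Definition Wt k := if interior n k then W k else 0.

Lemma W_gap i j k : consn i j -> (i.+1 < j)%N -> (i <= k <= j)%N -> W k = Phi i j k.
Proof.
move=> hc hij hk; have [hi hj _ hf] := hc.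
have jn := Mn_lt hj.
rewrite /W; case: ifP => hkM.
  have hik : (i < k < j)%N.
    case: (ltngtP i k) => h1; last by rewrite -h1 hi in hkM.
      case: (ltngtP k j) => h2; last by rewrite h2 hj in hkM.
        lia. lia.
    lia.
  by have [-> ->] := gap_unique h0 hn hc hik.
have kij : k = i \/ k = j.
  case: (ltngtP i k) => h1; last by left.
    case: (ltngtP k j) => h2; last by right.
      by move: (hf k); rewrite h1 h2 hkM => /(_ isT).
    lia.
  lia.
case: kij => ek; subst k.
  have -> : (i.+1 \notin Mn) by apply: hf; lia.
  have hik : (i < i.+1 < j)%N by lia.
  by have [-> ->] := gap_unique h0 hn hc hik.
have hj1 : j.-1 \notin Mn by apply: hf; lia.
have -> : (j.+1 \notin Mn) = false.
  by have := htw hj; rewrite (negbTE hj1) andbF orbF => ->.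
rewrite hj1.
have hik : (i < j.-1 < j)%N by lia.
by have [-> ->] := gap_unique h0 hn hc hik.
Qed.

Lemma W_cases k : interior n k -> W k = s2 z k \/
  exists i j, [/\ consn i j, (i.+1 < j)%N & (i <= k <= j)%N].
Proof.
rewrite /interior => hk.
have kn : (k < n)%N by lia.
case hk0 : (k \in Mn); last first.
  right; have [hc hh] := free_gap h0 hn kn (negbT hk0).
  exists (lo M k), (hi M k); split => //; lia.
case hk1 : (k.+1 \in Mn); last first.
  have kn1 : (k.+1 < n)%N by lia.
  right; have [hc hh] := free_gap h0 hn kn1 (negbT hk1).
  have := lo_max (leqnSn k) hk0.
  exists (lo M k.+1), (hi M k.+1); split => //; lia.
case hk2 : (k.-1 \in Mn); last first.
  have kn1 : (k.-1 < n)%N by lia.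
  have kn2 : (k.-1 <= k)%N by lia.
  right; have [hc hh] := free_gap h0 hn kn1 (negbT hk2).
  have := hi_min kn2 hk0.
  exists (lo M k.-1), (hi M k.-1); split => //; lia.
by left; rewrite /W hk0 hk1 hk2.
Qed.


Lemma sg_pm (x : R) : x != 0 -> Num.sg x = 1 \/ Num.sg x = -1.
Proof.
move=> hx; case: (ltrgt0P x) => h; try by [left; rewrite gtr0_sg | right; rewrite ltr0_sg].
  by rewrite h eqxx in hx.

Qed.

Lemma sg_le1 (x : R) : `|Num.sg x| <= 1.
Proof. by rewrite normr_sg; case: (x != 0). Qed.

Lemma Phi_bound i j k : (i < j)%N -> (i <= k <= j)%N -> `|Phi i j k| <= 1.
Proof.
move=> hij hk.
pose t : R := (k - i)%:R / (j - i)%:R.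
have hp : 0 < (j - i)%:R :> R by rewrite ltr0n; lia.
have t0 : 0 <= t by rewrite /t divr_ge0 // ler0n.
have t1 : t <= 1 by rewrite /t ler_pdivrMr // mul1r ler_nat; lia.
have u1 : `|ui i j| <= 1 by rewrite /ui; case: ifP => _; exact: sg_le1.
have u2 : `|uj i j| <= 1 by rewrite /uj; case: ifP => _; exact: sg_le1.
have -> : Phi i j k = (1 - t) * ui i j + t * uj i j by rewrite /Phi /t; ring.
clearbody t.
have t2 : 0 <= 1 - t by rewrite subr_ge0.
apply: le_trans (ler_normD _ _) _; rewrite !normrM (ger0_norm t0) (ger0_norm t2).
have a1 : (1 - t) * `|ui i j| <= 1 - t by rewrite ler_piMr // subr_ge0.
have a2 : t * `|uj i j| <= t by rewrite ler_piMr.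
lra.
Qed.

Lemma sgE k : s2 z k = Num.sg (dd z k).
Proof. by []. Qed.

Lemma sg_cert k : s2 z k * dd z k = `|dd z k|.
Proof. by rewrite normrEsg. Qed.

Lemma Phi_cert i j k : consn i j -> (i.+1 < j)%N -> (i <= k <= j)%N ->
  Phi i j k * dd z k = `|dd z k|.
Proof.
move=> hc hij hk.
have [i0 jn] := gap_int hc hij.
have hint : forall h, (i <= h <= j)%N -> interior n h by move=> h hh; rewrite /interior; lia.
have [d0|dn0] := eqVneq (dd z k) 0; first by rewrite d0 mulr0 normr0.
have sk0 : s2 z k != 0 by rewrite sgE sgr_eq0.
case: (boolP (caseii i j)) => hc2.
  have kij : k = i \/ k = j.
    case: (ltngtP i k) => h1; last by left.
      case: (ltngtP k j) => h2; last by right.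
        by move/caseiiP: hc2 => /(_ k); rewrite h1 h2 => /(_ isT) e; rewrite e eqxx in sk0.
      lia.
    lia.
  case: kij => ->.
    by rewrite /Phi /ui hc2 subnn mul0r mulr0 addr0 sg_cert.
  have -> : Phi i j j = uj i j.
    rewrite /Phi divff; first ring.
    by rewrite pnatr_eq0; lia.
  by rewrite /uj hc2 sg_cert.
have hL : forall k h, (i <= k <= j)%N -> (i <= h <= j)%N ->
   s2 z k != 0 -> s2 z h != 0 -> s2 z k = s2 z h.
  case: (hSC hc) => [hL|hR]; last by move/caseiiP: hR; rewrite (negbTE hc2).
  by move=> k' h' hk' hh' ; apply: hL => //; apply: hint.
rewrite /Phi /ui /uj (negbTE hc2) subrr mul0r addr0.
have e1 : s2 z k * s2 z k = 1 by case: (sg_pm dn0); rewrite sgE => ->; ring.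
set S := \sum_(i <= h < j.+1) s2 z h.
have key : 1 <= s2 z k * S.
  have hkr : k \in index_iota i j.+1 by rewrite mem_index_iota; lia.
  have hu : uniq (index_iota i j.+1) by rewrite /index_iota iota_uniq.
  rewrite /S mulr_sumr (bigD1_seq k hkr hu) /=.
  rewrite e1 lerDl big_seq_cond; apply: sumr_ge0 => h /andP [hh _].
  move: hh; rewrite mem_index_iota => hh.
  have [->|hn0] := eqVneq (s2 z h) 0; first by rewrite mulr0.
  by rewrite -(hL k h) // ?e1 //; lia.
have -> : sig i j = s2 z k.
  rewrite /sig -/S; case: (sg_pm dn0); rewrite -sgE => he; rewrite he in key *.
    by rewrite gtr0_sg //; lra.
  by rewrite ltr0_sg //; lra.
exact: sg_cert.
Qed.

Lemma Phi_affine i j m : (i < m)%N -> Phi i j m.+1 - 2 * Phi i j m + Phi i j m.-1 = 0.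
Proof.
move=> h.
have e1 : (m.+1 - i)%:R = (m - i)%:R + 1 :> R.
  have -> : (m.+1 - i = (m - i).+1)%N by lia.
  by rewrite -natr1.
have e2 : (m.-1 - i)%:R + 1 = (m - i)%:R :> R.
  have -> : (m - i = (m.-1 - i).+1)%N by lia.
  by rewrite -natr1.
rewrite /Phi e1 -e2; ring.
Qed.

Lemma W_P1 k : interior n k -> `|W k| <= 1.
Proof.
move=> hk; case: (W_cases hk) => [->|[i [j [hc hij hik]]]]; first exact: sg_le1.
rewrite (W_gap hc hij hik); apply: Phi_bound => //; lia.
Qed.

Lemma W_P2 k : interior n k -> W k * dd z k = `|dd z k|.
Proof.
move=> hk; case: (W_cases hk) => [->|[i [j [hc hij hik]]]]; first exact: sg_cert.
by rewrite (W_gap hc hij hik); apply: Phi_cert.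
Qed.

Lemma W_P3 m : (m < n)%N -> m \notin Mn -> Wt m.+1 - 2 * Wt m + Wt m.-1 = 0.
Proof.
move=> hm hf.
have [hc hh] := free_gap h0 hn hm hf.
set i := lo M m in hc hh *; set j := hi M m in hc hh *.
have hij : (i.+1 < j)%N by lia.
have [i0 jn] := gap_int hc hij.
rewrite /Wt.
have -> : interior n m.+1 by rewrite /interior; lia.
have -> : interior n m by rewrite /interior; lia.
have -> : interior n m.-1 by rewrite /interior; lia.
rewrite (W_gap hc hij (_ : (i <= m.+1 <= j)%N)); last by lia.
rewrite (W_gap hc hij (_ : (i <= m <= j)%N)); last by lia.
rewrite (W_gap hc hij (_ : (i <= m.-1 <= j)%N)); last by lia.
apply: Phi_affine; lia.
Qed.

End Cert.

End P3.
Import P3.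

Module P4.
Set Implicit Arguments. Unset Strict Implicit. Unset Printing Implicit Defensive.

Lemma sbp (R : realFieldType) (N : nat) (W v : nat -> R) : W 0%N = 0 -> W N.+1 = 0 -> W N.+2 = 0 ->
 \sum_(0 <= r < N) W r.+1 * (v r - 2 * v r.+1 + v r.+2) =
 \sum_(0 <= j < N.+2) v j * (W j.+1 - 2 * W j + W j.-1).
Proof.
move=> h0 h1 h2.
have A : \sum_(0 <= j < N.+2) v j * W j.+1 = \sum_(0 <= r < N) W r.+1 * v r.
  rewrite big_nat_recr // big_nat_recr //= h1 h2 !mulr0 !addr0.
  by apply: eq_bigr => r _; exact: mulrC.
have B : \sum_(0 <= j < N.+2) v j * W j = \sum_(0 <= r < N) W r.+1 * v r.+1.
  rewrite big_nat_recr //= h1 mulr0 addr0 big_nat_recl // h0 mulr0 add0r.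
  by apply: eq_bigr => r _; exact: mulrC.
have C : \sum_(0 <= j < N.+2) v j * W j.-1 = \sum_(0 <= r < N) W r.+1 * v r.+2.
  rewrite big_nat_recl // big_nat_recl //= h0 !mulr0 !add0r.
  by apply: eq_bigr => r _; exact: mulrC.
have -> : \sum_(0 <= j < N.+2) v j * (W j.+1 - 2 * W j + W j.-1) =
  \sum_(0 <= j < N.+2) v j * W j.+1 - 2 * \sum_(0 <= j < N.+2) v j * W j
  + \sum_(0 <= j < N.+2) v j * W j.-1.
  rewrite mulr_sumr -sumrB -big_split /=; apply: eq_bigr => j _; ring.
rewrite A B C mulr_sumr -sumrB -big_split /=; apply: eq_bigr => j _; ring.
Qed.

Section Opt.
Variables (R : realFieldType) (n : nat) (M : {set 'I_n}) (z : 'cV[R]_n).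
Local Notation Mn := (Mn M).
Local Notation consn := (consn M).
Hypothesis h3 : (3 <= n)%N.
Hypothesis h0 : 0%N \in Mn.
Hypothesis hn : n.-1 \in Mn.
Hypothesis htw : forall k, k \in Mn -> (k.+1 \in Mn) || ((0 < k)%N && (k.-1 \in Mn)).
Hypothesis hSC : forall i j, consn i j -> SCn z i j.

Lemma l1E (w : 'cV[R]_n) : l1norm (diff2 R n *m w) = \sum_(0 <= r < n - 2) `|dd w r.+1|.
Proof. by rewrite /l1norm big_mkord; apply: eq_bigr => r _; rewrite diff2E. Qed.

Lemma cert_opt (z' : 'cV[R]_n) : (forall i, i \in M -> z i 0 = z' i 0) ->
  l1norm (diff2 R n *m z) <= l1norm (diff2 R n *m z').
Proof.
move=> hzz.
pose Wt := Wt M z.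
have Wint : forall r, (r < n - 2)%N -> interior n r.+1 by move=> r hr; rewrite /interior; lia.
rewrite !l1E.
have step1 : \sum_(0 <= r < n - 2) `|dd z r.+1| = \sum_(0 <= r < n - 2) Wt r.+1 * dd z r.+1.
  rewrite big_seq [RHS]big_seq; apply: eq_bigr => r; rewrite mem_index_iota => hr.
  rewrite /Wt /P3.Wt Wint; last by lia.
  by rewrite W_P2 //; apply: Wint; lia.
have step2 : \sum_(0 <= r < n - 2) Wt r.+1 * dd z' r.+1 <= \sum_(0 <= r < n - 2) `|dd z' r.+1|.
  apply: ler_sum => r _.
  apply: le_trans (ler_norm _) _; rewrite normrM ler_piMl //.
  rewrite /Wt /P3.Wt; case: ifP => hi; first exact: W_P1.
  by rewrite normr0.
pose v j := zat z j - zat z' j.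
have step3 : \sum_(0 <= r < n - 2) Wt r.+1 * dd z r.+1 =
  \sum_(0 <= r < n - 2) Wt r.+1 * dd z' r.+1 +
  \sum_(0 <= r < n - 2) Wt r.+1 * (v r - 2 * v r.+1 + v r.+2).
  rewrite -big_split; apply: eq_bigr => r _; rewrite /v /dd /=; ring.
have step4 : \sum_(0 <= r < n - 2) Wt r.+1 * (v r - 2 * v r.+1 + v r.+2) = 0.
  have Wn : forall k, ~~ interior n k -> Wt k = 0 by move=> k hk; rewrite /Wt /P3.Wt (negbTE hk).
  have w0 : Wt 0%N = 0 by apply: Wn; rewrite /interior; lia.
  have w1 : Wt (n - 2).+1 = 0 by apply: Wn; rewrite /interior; lia.
  have w2 : Wt (n - 2).+2 = 0 by apply: Wn; rewrite /interior; lia.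
  rewrite (sbp v w0 w1 w2).
  rewrite big_seq; apply: big1 => j; rewrite mem_index_iota => hj.
  case hjM : (j \in Mn).
    case: (Mn_ord hjM) => i hi ei.
    by rewrite /v -ei !zat_ord hzz // subrr mul0r.
  by rewrite /Wt W_P3 ?hjM ?mulr0 //; lia.
by rewrite step1 step3 step4 addr0.
Qed.

End Opt.

End P4.
Import P4.

Module P5.
Set Implicit Arguments. Unset Strict Implicit. Unset Printing Implicit Defensive.

Section Tent.
Variable R : realFieldType.

Lemma relu_d2 (m p : nat) : ((m.-1 - p)%:R - 2 * (m - p)%:R + (m.+1 - p)%:R : R) = (m == p)%:R.
Proof.
case: (ltngtP m p) => h.
- have -> : (m.-1 - p = 0)%N by lia.
  have -> : (m - p = 0)%N by lia.
  have -> : (m.+1 - p = 0)%N by lia.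
  by rewrite /= mulr0 subrr addr0.
- have -> : (m.+1 - p = (m - p).+1)%N by lia.
  have -> : (m - p = (m.-1 - p).+1)%N by lia.
  rewrite -!natr1 /=; ring.
- subst p.
  have -> : (m.-1 - m = 0)%N by lia.
  have -> : (m - m = 0)%N by lia.
  have -> : (m.+1 - m = 1)%N by lia.
  by rewrite /= mulr0 subrr add0r.
Qed.

Definition tent (a b c m : nat) : R :=
  (c - b)%:R * (m - a)%:R - (c - a)%:R * (m - b)%:R + (b - a)%:R * (m - c)%:R.

Lemma tent_d2 a b c m : tent a b c m.-1 - 2 * tent a b c m + tent a b c m.+1 =
  (c - b)%:R * (m == a)%:R - (c - a)%:R * (m == b)%:R + (b - a)%:R * (m == c)%:R.
Proof. rewrite -(relu_d2 m a) -(relu_d2 m b) -(relu_d2 m c) /tent; ring. Qed.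

Lemma tent_out a b c m : (a < b < c)%N -> (m <= a)%N || (c <= m)%N -> tent a b c m = 0.
Proof.
move=> h; rewrite /tent; case/orP => hm.
  have -> : (m - a = 0)%N by lia.
  have -> : (m - b = 0)%N by lia.
  have -> : (m - c = 0)%N by lia.
  by rewrite !mulr0 subrr addr0.
rewrite !natrB; [ring | lia ..].
Qed.

Lemma pw (d sg0 t Eb Ex Eo : R) (ib ix io : bool) :
 0 <= t -> 0 <= Eo -> `|sg0| = 1 -> ~~ (ib && ix) -> ~~ (ib && io) -> ~~ (ix && io) ->
 (ib -> Num.sg d = sg0 /\ t * Eb <= `|d|) -> (ix -> Num.sg d = - sg0 /\ t * Ex <= `|d|) ->
 `|d + t * sg0 * (Ex * ix%:R + Eo * io%:R - Eb * ib%:R)| <=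
   `|d| - t * Eb * ib%:R - t * Ex * ix%:R + t * Eo * io%:R.
Proof.
move=> t0 e0 hs; case: ib; case: ix; case: io => //= _ _ _ H1 H2;
  rewrite ?mulr1n ?mulr0n.
- have [hsd hle] := H1 isT.
  have -> : d + t * sg0 * (Ex * 0 + Eo * 0 - Eb * 1) = sg0 * (`|d| - t * Eb).
    rewrite {1}[d]numEsg hsd; ring.
  rewrite normrM hs mul1r ger0_norm; [lra | lra].
- have [hsd hle] := H2 isT.
  have -> : d + t * sg0 * (Ex * 1 + Eo * 0 - Eb * 0) = - sg0 * (`|d| - t * Ex).
    rewrite {1}[d]numEsg hsd; ring.
  rewrite normrM normrN hs mul1r ger0_norm; [lra | lra].
- have h := ler_normD d (t * sg0 * Eo).
  rewrite !normrM hs (ger0_norm t0) (ger0_norm e0) in h.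
  have -> : d + t * sg0 * (Ex * 0 + Eo * 1 - Eb * 0) = d + t * sg0 * Eo by ring.
  apply: le_trans h _; lra.
- have -> : d + t * sg0 * (Ex * 0 + Eo * 0 - Eb * 0) = d by ring.
  lra.
Qed.

End Tent.

End P5.
Import P5.

Module P6.
Set Implicit Arguments. Unset Strict Implicit. Unset Printing Implicit Defensive.

Section Imp.
Variables (R : realFieldType) (n : nat) (M : {set 'I_n}).

Lemma sum_ind2 q : \sum_(0 <= r < n - 2) ((r.+1 == q)%:R : R) = (interior n q)%:R.
Proof.
case: (boolP (interior n q)) => hq.
  have hkr : q.-1 \in index_iota 0 (n - 2) by rewrite mem_index_iota; move: hq; rewrite /interior; lia.
  have hu : uniq (index_iota 0 (n - 2)) by rewrite /index_iota iota_uniq.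
  rewrite (bigD1_seq _ hkr hu) /=.
  have -> : (q.-1.+1 == q) by move: hq; rewrite /interior; lia.
  rewrite big1 ?addr0 // => r hr.
  have -> : (r.+1 == q) = false by move: hr hq; rewrite /interior; lia.
  by [].
rewrite big_seq big1 // => r; rewrite mem_index_iota => hr.
have -> : (r.+1 == q) = false by move: hr hq; rewrite /interior; lia.
by [].
Qed.

Lemma improve (z : 'cV[R]_n) a b c x : (a < b < c)%N -> (c < n)%N ->
  (forall m, (a < m < c)%N -> m \notin Mn M) -> interior n b -> interior n x ->
  (x == a) || (x == c) -> dd z b != 0 -> Num.sg (dd z x) = - Num.sg (dd z b) ->
  l1_optimal (selmx R M) (selmx R M *m z) z -> False.
Proof.
move=> habc hc hfree hb hx hxac hdb hsx [_ hopt].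
have hca : (c == a) = false by clear -habc; lia.
have hxb : x != b by clear -habc hxac; lia.
have hob : (if x == a then c else a) != b by clear -habc; case: ifP; lia.
have hox : (if x == a then c else a) != x by clear -habc hxac; case: ifP; lia.
pose sg0 := Num.sg (dd z b).
have hs : `|sg0| = 1 by rewrite normr_sg hdb.
have hdx : dd z x != 0.
  apply/eqP => e; move: hsx; rewrite e sgr0 => /eqP; rewrite eq_sym oppr_eq0 sgr_eq0.
  by rewrite (negbTE hdb).
pose Eb : R := (c - a)%:R.
pose Ex : R := if x == a then (c - b)%:R else (b - a)%:R.
pose Eo : R := if x == a then (b - a)%:R else (c - b)%:R.
pose o := if x == a then c else a.
have Ebe : Eb = Ex + Eo.
  rewrite /Eb /Ex /Eo; case: ifP => _; rewrite -natrD; congr (_%:R); clear -habc; lia.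
have Exp : 0 < Ex by rewrite /Ex; case: ifP => _; rewrite ltr0n; clear -habc; lia.
have Eop : 0 <= Eo by rewrite /Eo; case: ifP => _; rewrite ler0n.
have Ebp : 0 < Eb by rewrite /Eb ltr0n; clear -habc; lia.
pose mn := Num.min `|dd z b| `|dd z x|.
have mnp : 0 < mn by rewrite /mn lt_min !normr_gt0 hdb hdx.
pose t := mn / Eb.
have tp : 0 < t by rewrite /t divr_gt0.
have tEb : t * Eb = mn by rewrite /t divfK // gt_eqF.
have h1 : t * Eb <= `|dd z b| by rewrite tEb /mn ge_min lexx.
have h2 : t * Ex <= `|dd z x|.
  have : t * Ex <= t * Eb by rewrite ler_pM2l // Ebe lerDl.
  have : mn <= `|dd z x| by rewrite /mn ge_min lexx orbT.
  lra.
pose z' := z + \col_(i < n) (t * sg0 * tent R a b c i).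
have hA : selmx R M *m z' = selmx R M *m z.
  rewrite mulmxDr; suff -> : selmx R M *m (\col_(i < n) (t * sg0 * tent R a b c i)) = 0 by rewrite addr0.
  apply/matrixP => r k; rewrite !mxE; apply: big1 => j _; rewrite !mxE.
  case: eqP => [ej|]; last by rewrite mul0r.
  have hjM : j \in M by rewrite -ej enum_valP.
  rewrite tent_out ?mulr0 //.
  case: (leqP (val j) a) => //= h; case: (leqP c (val j)) => //= h'.
  by move: (hfree (val j)); rewrite h h' inMn hjM => /(_ isT).
have hz' := hopt z' hA.
rewrite !l1E in hz'.
have zat' : forall m, zat z' m = zat z m + t * sg0 * tent R a b c m.
  move=> m; case: (ltnP m n) => hm.
    have e1 := zat_ord z' (Ordinal hm); have e2 := zat_ord z (Ordinal hm); simpl in e1, e2.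
    by rewrite e1 e2 !mxE.
  rewrite !zat_ge // tent_out ?mulr0 ?addr0 //; apply/orP; right; exact: leq_trans (ltnW hc) hm.
have dd' : forall P, dd z' P = dd z P + t * sg0 * (Ex * (P == x)%:R + Eo * (P == o)%:R - Eb * (P == b)%:R).
  move=> P.
  have e : tent R a b c P.-1 - 2 * tent R a b c P + tent R a b c P.+1 =
      Ex * (P == x)%:R + Eo * (P == o)%:R - Eb * (P == b)%:R.
    rewrite tent_d2 /Ex /Eo /o /Eb; case/orP: hxac => /eqP ->; rewrite ?eqxx.
      ring.
    by rewrite hca; ring.
  rewrite /dd !zat' -e; ring.
have bound : \sum_(0 <= r < n - 2) `|dd z' r.+1| <=
   \sum_(0 <= r < n - 2) (`|dd z r.+1| - t * Eb * (r.+1 == b)%:R - t * Ex * (r.+1 == x)%:R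
       + t * Eo * (r.+1 == o)%:R).
  apply: ler_sum => r _; rewrite dd'; apply: pw.
  - exact: ltW.
  - exact: Eop.
  - exact: hs.
  - apply/negP => /andP [/eqP e1 /eqP e2].
    by move: hxb; rewrite -e1 -e2 eqxx.
  - apply/negP => /andP [/eqP e1 /eqP e2].
    by move: hob; rewrite -/o -e1 -e2 eqxx.
  - apply/negP => /andP [/eqP e1 /eqP e2].
    by move: hox; rewrite -/o -e1 -e2 eqxx.
  - by move=> /eqP ->; split.
  - by move=> /eqP ->; split.
have e3 : \sum_(0 <= r < n - 2) (`|dd z r.+1| - t * Eb * (r.+1 == b)%:R - t * Ex * (r.+1 == x)%:R
       + t * Eo * (r.+1 == o)%:R) = \sum_(0 <= r < n - 2) `|dd z r.+1|
       - t * Eb * (interior n b)%:R - t * Ex * (interior n x)%:R + t * Eo * (interior n o)%:R.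
  rewrite -!sum_ind2 !mulr_sumr -!sumrB -big_split /=; apply: eq_bigr => r _; ring.
rewrite e3 hb hx in bound.
have so : t * Eo * (interior n o)%:R <= t * Eo.
  case: (interior n o); rewrite ?mulr1 ?mulr0 //; apply: mulr_ge0 => //; exact: ltW.
have tEe : t * Eb = t * Ex + t * Eo by rewrite Ebe mulrDr.
have tEx : 0 < t * Ex by rewrite mulr_gt0.
move: hz' bound so tEe tEx; rewrite /= ?mulr1n; lra.
Qed.

End Imp.

End P6.
Import P6.

Unset Implicit Arguments. Set Strict Implicit.

Theorem theorem1 (R : realFieldType) (n : nat) (M : {set 'I_n})
  (y : 'cV[R]_#|M|) (z : 'cV[R]_n) :
  (3 <= n)%N ->
  twin_union M ->
  (exists2 i : 'I_n, i \in M & val i = 0%N) ->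
  (exists2 i : 'I_n, i \in M & val i = n.-1) ->
  selmx R M *m z = y ->
  (l1_optimal (selmx R M) y z <-> sign_consistent M z).
Proof.
move=> h3 htwin [i0 hi0 ei0] [iN hiN eiN] hAz.
have h0 : 0%N \in Mn M by rewrite -ei0 inMn.
have hn : n.-1 \in Mn M by rewrite -eiN inMn.
have htw : forall k, k \in Mn M -> (k.+1 \in Mn M) || ((0 < k)%N && (k.-1 \in Mn M)).
  move=> k /Mn_ord [i hi ei].
  have [j hj [ej|ej]] := htwin i hi.
    by rewrite -ei -ej inMn hj.
  by rewrite -ei ej /= inMn hj orbT.
split.
- move=> hopt.
  have hopt' : l1_optimal (selmx R M) (selmx R M *m z) z by rewrite hAz.
  move=> i j hcons.
  have hc := cons_consn hcons.
  have jn := ltn_ord j.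
  case: (boolP (caseii z i j)) => hc2.
    by right; apply/(caseiiP z h0 hn).
  left => k h hk hh ik ih sk sh.
  case: (eqVneq (s2 z k) (s2 z h)) => // hne; exfalso.
  move/allPn: hc2 => [m hm hsm]; move: hm; rewrite mem_iota => hm.
  have hmr : (i < m < j)%N by clear -hm; lia.
  have im : interior n m by rewrite /interior; clear -hmr jn; lia.
  have dm : dd z m != 0 by move: hsm; rewrite sgE sgr_eq0.
  have dk : dd z k != 0 by move: sk; rewrite sgE sgr_eq0.
  have dh : dd z h != 0 by move: sh; rewrite sgE sgr_eq0.
  have [x [hxr hxi hxs]] : exists x, [/\ (i <= x <= j)%N, interior n x &
      Num.sg (dd z x) = - Num.sg (dd z m)].
    move: hne; rewrite !sgE.
    case: (sg_pm dk) => ek; case: (sg_pm dh) => eh; case: (sg_pm dm) => em;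
      rewrite ?ek ?eh ?em ?eqxx //= => _.
    - by exists h; split.
    - exists k; split => //. rewrite ek. ring.
    - by exists k; split.
    - exists h; split => //. rewrite eh. ring.
  have [_ _ _ hfree] := hc.
  case: (ltngtP m x) => hmx.
  + apply: (@improve R n M z m.-1 m x x) => //.
    * by clear -hmr hmx; lia.
    * by clear -hxr jn; lia.
    * by move=> q hq; apply: hfree; clear -hq hmr hxr; lia.
    * by rewrite eqxx orbT.
  + apply: (@improve R n M z x m m.+1 x) => //.
    * by clear -hmr hmx; lia.
    * by clear -hmr jn; lia.
    * by move=> q hq; apply: hfree; clear -hq hmr hxr; lia.
    * by rewrite eqxx.
  + move: hxs; rewrite -hmx => /eqP; rewrite -subr_eq0 opprK -mulr2n mulrn_eq0 /= sgr_eq0.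
    by rewrite (negbTE dm).
- move=> hsc; split => // z' hz'.
  apply: (cert_opt h3 h0 hn htw).
    move=> i j /consn_cons [oi [oj [ei ej hcons]]].
    rewrite /SCn -ei -ej; exact: hsc.
  move=> i hi; apply: (selmx_eq _ hi).
  by rewrite hAz hz'.
Qed.
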